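(* Let $\Omega\subset\mathbb{R}^2$ be open, $\lambda>0$, and let $u\in L^2(\Omega)$ satisfy $-\Delta u=\lambda u$ in $\Omega$. Let $\mathbf{x}_0\in\Omega$, $h>0$, $\alpha\in(0,1)$, and let $\mathbf{e}^-,\mathbf{e}^+$ be unit vectors with angle $\alpha\pi$ from $\mathbf{e}^-$ to $\mathbf{e}^+$; put $\Gamma^\pm=\{\mathbf{x}_0+t\mathbf{e}^\pm:0\le t\le h\}\subset\Omega$. Suppose $u=0$ on $\Gamma^+\cup\Gamma^-$ (both are nodal lines). Let $n\in\mathbb{N}$, $n\ge3$. If $\alpha\neq q/p$ for all integers $1\le q<p\le n-1$, then $u$ vanishes up to the order $n$ at $\mathbf{x}_0$, i.e. all partial derivatives of $u$ of order at most $n-1$ vanish at $\mathbf{x}_0$.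
   Context: No boundary condition is imposed on $\partial\Omega$; $u$ is real-analytic in $\Omega$. ''Vanishes up to order $n$'' means every homogeneous term of degree $<n$ in the Taylor expansion of $u$ at $\mathbf{x}_0$ vanishes. *)

(* Defs.v *)
From HB Require Import structures.
From mathcomp Require Import all_boot all_order all_algebra.
From mathcomp Require Import all_classical all_reals all_analysis.
Set Implicit Arguments. Unset Strict Implicit. Unset Printing Implicit Defensive.
Import Order.TTheory GRing.Theory Num.Theory numFieldNormedType.Exports.
Local Open Scope classical_set_scope.
Local Open Scope ring_scope.

Definition pdx {R : realType} (f : R * R -> R) : R * R -> R :=
  fun p => derive1 (fun t : R => f (t, p.2)) p.1.
Definition pdy {R : realType} (f : R * R -> R) : R * R -> R :=
  fun p => derive1 (fun t : R => f (p.1, t)) p.2.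

(* iterated partial derivative along the list of directions s
   (true = d/dx1, false = d/dx2); its order is size s *)
Definition pderiv {R : realType} (s : seq bool) (f : R * R -> R) : R * R -> R :=
  foldr (fun b g => if b then pdx g else pdy g) f s.

Definition smooth_on {R : realType} (O : set (R * R)) (f : R * R -> R) : Prop :=
  forall s : seq bool,
    forall p, O p ->
      {for p, continuous (pderiv s f)} /\
      derivable (fun t : R => pderiv s f (t, p.2)) p.1 1 /\
      derivable (fun t : R => pderiv s f (p.1, t)) p.2 1.

Definition laplacian {R : realType} (f : R * R -> R) : R * R -> R :=
  fun p => pdx (pdx f) p + pdy (pdy f) p.

Definition L2_on {R : realType} (O : set (R * R)) (u : R * R -> R) : Prop :=
  ((@lebesgue_measure R) \x (@lebesgue_measure R))%E.-integrable O
     (fun p => ((u p) ^+ 2)%:E).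

Definition segment {R : realType} (x0 e : R * R) (h : R) : set (R * R) :=
  [set x | exists t : R, 0 <= t <= h /\ x = (x0.1 + t * e.1, x0.2 + t * e.2)].

(* Main.v *)
Require Import Defs.
From HB Require Import structures.
From mathcomp Require Import all_boot all_order all_algebra.
From mathcomp Require Import all_classical all_reals all_analysis.
From mathcomp Require Import ring lra zify.
Set Implicit Arguments. Unset Strict Implicit. Unset Printing Implicit Defensive.
Import Order.TTheory GRing.Theory Num.Theory numFieldNormedType.Exports.
Local Open Scope classical_set_scope.
Local Open Scope ring_scope.
Section S.
Variable R : realType.
Lemma mvt_abs (f df : R -> R) (x d : R) :
  (forall y, `|y - x| <= `|d| -> is_derive y 1 f (df y)) ->
  exists2 c, `|c - x| <= `|d| & f (x + d) - f x = d * df c.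
Proof.
move=> H.
have dv : forall y, `|y - x| <= `|d| -> derivable f y 1.
  by move=> y /H [].
case: (leP 0 d) => d0.
- have le1 : x <= x + d by rewrite lerDl.
  have der1 : forall y, y \in `]x, x + d[%R -> is_derive y 1 f (df y).
    move=> y; rewrite in_itv /= => /andP[h1 h2]; apply: H.
    rewrite (ger0_norm d0) ger0_norm; lra.
  have cont1 : {within `[x, x + d], continuous f}.
    apply: derivable_within_continuous => y; rewrite in_itv /= => /andP[h1 h2].
    apply: dv; rewrite (ger0_norm d0) ger0_norm; lra.
  have [c] := @MVT_segment R f df x (x + d) le1 der1 cont1.
  rewrite in_itv /= => /andP[h1 h2] ->.
  exists c; last by rewrite addrAC subrr add0r mulrC.
  rewrite (ger0_norm d0) ger0_norm; lra.
- have le1 : x + d <= x by rewrite gerDl ltW.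
  have der1 : forall y, y \in `]x + d, x[%R -> is_derive y 1 f (df y).
    move=> y; rewrite in_itv /= => /andP[h1 h2]; apply: H.
    rewrite (ler0_norm (ltW d0)) ler0_norm; lra.
  have cont1 : {within `[x + d, x], continuous f}.
    apply: derivable_within_continuous => y; rewrite in_itv /= => /andP[h1 h2].
    apply: dv; rewrite (ler0_norm (ltW d0)) ler0_norm; lra.
  have [c] := @MVT_segment R f df (x + d) x le1 der1 cont1.
  rewrite in_itv /= => /andP[h1 h2] E.
  exists c.
    rewrite (ler0_norm (ltW d0)) ler0_norm; lra.
  have -> : f (x + d) - f x = - (f x - f (x + d)) by ring.
  rewrite E; ring.
Qed.

Lemma nbhs_box (p : R * R) (P : set (R*R)) : nbhs p P ->
  exists2 d : R, 0 < d & forall q : R*R, `|q.1 - p.1| < d -> `|q.2 - p.2| < d -> P q.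
Proof.
move=> /nbhs_ballP[d d0 H]; exists d => // q h1 h2; apply: H.
by split => /=; [move: h1|move: h2]; rewrite distrC.
Qed.

Lemma cont_box (f : R*R -> R) p : {for p, continuous f} -> forall e, 0 < e ->
  exists2 d : R, 0 < d & forall q : R*R, `|q.1 - p.1| < d -> `|q.2 - p.2| < d -> `|f q - f p| < e.
Proof.
move=> /cvgrPdist_lt H e e0; have := H e e0.
move/nbhs_box => [d d0 Hd]; exists d => // q h1 h2.
by rewrite distrC; exact: Hd.
Qed.

Lemma pderiv_cat (s1 s2 : seq bool) (f : R * R -> R) :
  pderiv (s1 ++ s2) f = pderiv s1 (pderiv s2 f).
Proof. exact: foldr_cat. Qed.

Variable O : set (R * R).
Hypothesis oO : open O.

Lemma open_box p : O p -> exists2 d : R, 0 < d & forall q : R*R,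
  `|q.1 - p.1| < d -> `|q.2 - p.2| < d -> O q.
Proof. by move=> Op; apply: nbhs_box; apply: oO. Qed.

Lemma smooth_pderiv f s : smooth_on O f -> smooth_on O (pderiv s f).
Proof. by move=> sf t p Op; rewrite -pderiv_cat; exact: sf. Qed.

Lemma isdx f p : smooth_on O f -> O p ->
  is_derive p.1 1 (fun t => f (t, p.2)) (pdx f p).
Proof.
move=> sf Op; have [_ [d _]] := sf [::] p Op.
by rewrite /pdx derive1E; exact: derivableP.
Qed.

Lemma isdy f p : smooth_on O f -> O p ->
  is_derive p.2 1 (fun t => f (p.1, t)) (pdy f p).
Proof.
move=> sf Op; have [_ [_ d]] := sf [::] p Op.
by rewrite /pdy derive1E; exact: derivableP.
Qed.

Lemma contp f s p : smooth_on O f -> O p -> {for p, continuous (pderiv s f)}.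
Proof. by move=> sf Op; have [] := sf s p Op. Qed.

Lemma pdx_loc f g p : (forall q, O q -> f q = g q) -> O p -> pdx f p = pdx g p.
Proof.
move=> fg Op; rewrite /pdx !derive1E; apply: near_eq_derive.
have [d d0 Hd] := open_box Op.
apply/nbhs_ballP; exists d => // t /= Bt; apply: fg; apply: Hd => /=.
  by move: Bt; rewrite /ball /= distrC.
by rewrite subrr normr0.
Qed.

Lemma pdy_loc f g p : (forall q, O q -> f q = g q) -> O p -> pdy f p = pdy g p.
Proof.
move=> fg Op; rewrite /pdy !derive1E; apply: near_eq_derive.
have [d d0 Hd] := open_box Op.
apply/nbhs_ballP; exists d => // t /= Bt; apply: fg; apply: Hd => /=.
  by rewrite subrr normr0.
by move: Bt; rewrite /ball /= distrC.
Qed.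

Lemma pdx_lin f g a b p : smooth_on O f -> smooth_on O g -> O p ->
  pdx (fun q => a * f q + b * g q) p = a * pdx f p + b * pdx g p.
Proof.
move=> sf sg Op.
have h := is_deriveD (is_deriveZ a (isdx sf Op)) (is_deriveZ b (isdx sg Op)).
by rewrite /pdx derive1E; case: h => _ <-.
Qed.

Lemma pdy_lin f g a b p : smooth_on O f -> smooth_on O g -> O p ->
  pdy (fun q => a * f q + b * g q) p = a * pdy f p + b * pdy g p.
Proof.
move=> sf sg Op.
have h := is_deriveD (is_deriveZ a (isdy sf Op)) (is_deriveZ b (isdy sg Op)).
by rewrite /pdy derive1E; case: h => _ <-.
Qed.


Lemma alg (h a b c d x y u v A B : R) : a - b - (c - d) = h * (x - y) ->
  x - y = h * A -> a - c - (b - d) = h * (u - v) -> u - v = h * B ->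
  h * (h * A) = h * (h * B).
Proof. by move=> E1 E2 E3 E4; rewrite -E2 -E4 -E1 -E3; ring. Qed.

Lemma fin (A B A' B' e : R) : A' = B' -> `|A' - A| < e -> `|B' - B| < e ->
  `|A - B| < e + e.
Proof.
move=> E a1 a2; rewrite (_ : A - B = (B' - B) - (A' - A)); last by rewrite E; ring.
by apply: le_lt_trans (ler_normB _ _) _; rewrite ltrD.
Qed.

Lemma min3 (d1 d2 d3 : R) : 0 < d1 -> 0 < d2 -> 0 < d3 ->
  exists2 h : R, 0 < h & [/\ h < d1, h < d2 & h < d3].
Proof.
move=> h1 h2 h3; exists (Num.min (Num.min d1 d2) d3 / 2).
  by rewrite divr_gt0 // !lt_min h1 h2 h3.
have H : Num.min (Num.min d1 d2) d3 / 2 < Num.min (Num.min d1 d2) d3.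
  by rewrite ltr_pdivrMr // ltr_pMr ?ltr1n // !lt_min h1 h2 h3.
by move: H; rewrite !lt_min => /andP[/andP[-> ->] ->].
Qed.

Lemma eq_by_eps (A B : R) : (forall e, 0 < e -> `|A - B| < e + e) -> A = B.
Proof.
move=> H; apply/eqP; rewrite -subr_eq0; apply/negPn/negP => nz.
have e0 : 0 < `|A - B| / 3 by rewrite divr_gt0 // normr_gt0.
have := H _ e0; lra.
Qed.

Lemma schwarz f p : smooth_on O f -> O p -> pdy (pdx f) p = pdx (pdy f) p.
Proof.
move=> sf Op; case: p Op => p1 p2 Op.
apply: eq_by_eps => e e0.
have [d1 d10 H1] := open_box Op.
have [d2 d20 H2] := cont_box (@contp f [:: false; true] _ sf Op) e0.
have [d3 d30 H3] := cont_box (@contp f [:: true; false] _ sf Op) e0.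
have [h h0 [hd1 hd2 hd3]] := min3 d10 d20 d30.
have hh : `|h| = h by rewrite ger0_norm // ltW.
have inO : forall x y, `|x - p1| <= `|h| -> `|y - p2| <= `|h| -> O (x, y).
  move=> x y; rewrite hh => hx hy; apply: H1 => /=; [exact: le_lt_trans hx hd1|exact: le_lt_trans hy hd1].
have nh : `|p2 + h - p2| <= `|h| by rewrite addrAC subrr add0r.
have n0 : `|p2 - p2| <= `|h| by rewrite subrr normr0.
have nh1 : `|p1 + h - p1| <= `|h| by rewrite addrAC subrr add0r.
have n01 : `|p1 - p1| <= `|h| by rewrite subrr normr0.
have [c1 c1h E1] := @mvt_abs (fun x => f (x, p2 + h) - f (x, p2))
   (fun x => pdx f (x, p2 + h) - pdx f (x, p2)) p1 h
   (fun y hy => is_deriveB (isdx sf (inO y _ hy nh))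
                           (isdx sf (inO y _ hy n0))).
have [c2 c2h E2] := @mvt_abs (fun y => pdx f (c1, y))
   (fun y => pdy (pdx f) (c1, y)) p2 h
   (fun y hy => isdy (@smooth_pderiv f [:: true] sf) (inO c1 y c1h hy)).
have [c3 c3h E3] := @mvt_abs (fun y => f (p1 + h, y) - f (p1, y))
   (fun y => pdy f (p1 + h, y) - pdy f (p1, y)) p2 h
   (fun y hy => is_deriveB (isdy sf (inO _ y nh1 hy))
                           (isdy sf (inO _ y n01 hy))).
have [c4 c4h E4] := @mvt_abs (fun x => pdy f (x, c3))
   (fun x => pdx (pdy f) (x, c3)) p1 h
   (fun x hx => isdx (@smooth_pderiv f [:: false] sf) (inO x c3 hx c3h)).
move: E1 E2 E3 E4 => /= E1 E2 E3 E4.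
have EE := alg E1 E2 E3 E4.
have h0' : h != 0 by rewrite gt_eqF.
move/(mulfI h0')/(mulfI h0'): EE => EE.
rewrite hh in c1h c2h c3h c4h.
have a1 := H2 (c1, c2) (le_lt_trans c1h hd2) (le_lt_trans c2h hd2).
have a2 := H3 (c4, c3) (le_lt_trans c4h hd3) (le_lt_trans c3h hd3).
exact: fin EE a1 a2.
Qed.


Lemma pderiv_cons b s (f : R * R -> R) :
  pderiv (b :: s) f = (if b then pdx (pderiv s f) else pdy (pderiv s f)).
Proof. by []. Qed.

Lemma pderiv_loc s f g p : (forall q, O q -> f q = g q) -> O p ->
  pderiv s f p = pderiv s g p.
Proof.
move=> fg; elim: s p => [|b s IH] p Op; first exact: fg.
rewrite !pderiv_cons; case: b.
  by apply: pdx_loc => // q Oq; exact: IH.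
by apply: pdy_loc => // q Oq; exact: IH.
Qed.

Lemma pderiv_lin s f g a b p : smooth_on O f -> smooth_on O g -> O p ->
  pderiv s (fun q => a * f q + b * g q) p = a * pderiv s f p + b * pderiv s g p.
Proof.
move=> sf sg; elim: s p => [|c s IH] p Op; first by [].
rewrite !pderiv_cons; case: c.
  transitivity (pdx (fun q => a * pderiv s f q + b * pderiv s g q) p).
    exact: pdx_loc IH Op.
  exact: pdx_lin (smooth_pderiv s sf) (smooth_pderiv s sg) Op.
transitivity (pdy (fun q => a * pderiv s f q + b * pderiv s g q) p).
  exact: pdy_loc IH Op.
exact: pdy_lin (smooth_pderiv s sf) (smooth_pderiv s sg) Op.
Qed.

Lemma comm_y j g p : smooth_on O g -> O p ->
  pdy (pderiv (nseq j true) g) p = pderiv (nseq j true) (pdy g) p.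
Proof.
move=> sg; elim: j p => [|j IH] p Op; first by [].
rewrite /= schwarz //; last exact: (@smooth_pderiv g (nseq j true)).
by apply: pdx_loc => // q Oq; exact: IH.
Qed.

Lemma canon s f p : smooth_on O f -> O p ->
  pderiv s f p = pderiv (nseq (count id s) true ++ nseq (count negb s) false) f p.
Proof.
move=> sf; elim: s p => [|b s IH] p Op; first by [].
rewrite pderiv_cons; case: b => /=.
  by rewrite ?add0n; apply: pdx_loc => // q Oq; exact: IH.
rewrite ?add0n ?add1n (@pdy_loc _ _ _ IH) // pderiv_cat comm_y //; last first.
  exact: smooth_pderiv.
by rewrite pderiv_cat.
Qed.


Lemma eq0_eps (x : R) : (forall e, 0 < e -> `|x| < e) -> x = 0.
Proof.
move=> H; apply/eqP/negPn/negP => nz.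
have h0 : 0 < `|x| by rewrite normr_gt0.
by have := H _ h0; rewrite ltxx.
Qed.

Lemma alg2 (h e1 e2 A1 B1 C X Y : R) : A1 = 0 -> C = 0 ->
  A1 - B1 = h * e1 * X -> B1 - C = h * e2 * Y -> h != 0 -> e1 * X + e2 * Y = 0.
Proof.
move=> A0 C0 E1 E2 h0.
have : h * (e1 * X + e2 * Y) = 0.
  by rewrite mulrDr !mulrA -E1 -E2 A0 C0; ring.
by move/eqP; rewrite mulf_eq0 (negbTE h0) /= => /eqP.
Qed.

Lemma fin2 (e1 e2 A B X Y e : R) : `|e1| <= 1 -> `|e2| <= 1 ->
  e1 * X + e2 * Y = 0 -> `|X - A| < e -> `|Y - B| < e -> `|e1 * A + e2 * B| < e + e.
Proof.
move=> n1 n2 E a1 a2.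
rewrite (_ : e1 * A + e2 * B = - (e1 * (X - A) + e2 * (Y - B))); last first.
  by apply/eqP; rewrite -subr_eq0 -E; apply/eqP; ring.
rewrite normrN; apply: le_lt_trans (ler_normD _ _) _.
rewrite !normrM; apply: ltrD.
  apply: le_lt_trans a1; rewrite ler_piMl //.
apply: le_lt_trans a2; rewrite ler_piMl //.
Qed.

Variable f : R * R -> R.
Hypothesis sf : smooth_on O f.

Definition ev (L : seq (R * seq bool)) (p : R * R) :=
  \sum_(c <- L) c.1 * pderiv c.2 f p.
Definition mapT (L : seq (R * seq bool)) := [seq (c.1, true :: c.2) | c <- L].
Definition mapF (L : seq (R * seq bool)) := [seq (c.1, false :: c.2) | c <- L].
Definition Dl (e1 e2 : R) (L : seq (R * seq bool)) :=
  [seq (e1 * c.1, true :: c.2) | c <- L] ++ [seq (e2 * c.1, false :: c.2) | c <- L].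

Lemma ev_Dl e1 e2 L p : ev (Dl e1 e2 L) p = e1 * ev (mapT L) p + e2 * ev (mapF L) p.
Proof.
rewrite /ev big_cat !big_map !mulr_sumr; congr (_ + _); apply: eq_bigr => c _ /=;
  by rewrite mulrA.
Qed.

Lemma ev_isdx L p : O p -> is_derive p.1 1 (fun t => ev L (t, p.2)) (ev (mapT L) p).
Proof.
move=> Op; elim: L => [|c L IH].
  have -> : (fun t => ev [::] (t, p.2)) = cst 0 by apply/funext => t; rewrite /ev big_nil.
  rewrite /ev big_nil; exact: is_derive_cst.
have -> : (fun t => ev (c :: L) (t, p.2)) =
    (c.1 \*: (fun t => pderiv c.2 f (t, p.2))) + (fun t => ev L (t, p.2)).
  by apply/funext => t; rewrite /ev big_cons.
have -> : ev (mapT (c :: L)) p = c.1 *: pdx (pderiv c.2 f) p + ev (mapT L) p.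
  by rewrite /ev /= big_cons.
exact: is_deriveD (is_deriveZ _ (isdx (smooth_pderiv c.2 sf) Op)) IH.
Qed.

Lemma ev_isdy L p : O p -> is_derive p.2 1 (fun t => ev L (p.1, t)) (ev (mapF L) p).
Proof.
move=> Op; elim: L => [|c L IH].
  have -> : (fun t => ev [::] (p.1, t)) = cst 0 by apply/funext => t; rewrite /ev big_nil.
  rewrite /ev big_nil; exact: is_derive_cst.
have -> : (fun t => ev (c :: L) (p.1, t)) =
    (c.1 \*: (fun t => pderiv c.2 f (p.1, t))) + (fun t => ev L (p.1, t)).
  by apply/funext => t; rewrite /ev big_cons.
have -> : ev (mapF (c :: L)) p = c.1 *: pdy (pderiv c.2 f) p + ev (mapF L) p.
  by rewrite /ev /= big_cons.
exact: is_deriveD (is_deriveZ _ (isdy (smooth_pderiv c.2 sf) Op)) IH.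
Qed.

Lemma ev_cont L p : O p -> {for p, continuous (ev L)}.
Proof.
move=> Op; elim: L => [|c L IH].
  have -> : ev [::] = cst 0 by apply/funext => q; rewrite /ev big_nil.
  exact: cvg_cst.
have -> : ev (c :: L) = (fun q => c.1 * pderiv c.2 f q) + ev L.
  by apply/funext => q; rewrite /ev big_cons.
apply: cvgD => //; apply: cvgMl_tmp; exact: contp.
Qed.


Lemma normMle (h e : R) : 0 < h -> `|e| <= 1 -> `|h * e| <= h.
Proof.
move=> h0 e1; rewrite normrM (gtr0_norm h0); rewrite ler_piMr //; exact: ltW.
Qed.

Lemma ray_point L (e1 e2 : R) (P : R * R) (d0 : R) : O P -> 0 < d0 ->
  `|e1| <= 1 -> `|e2| <= 1 ->
  (forall t, `|t| < d0 -> ev L (P.1 + t * e1, P.2 + t * e2) = 0) ->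
  ev (Dl e1 e2 L) P = 0.
Proof.
case: P => P1 P2 OP d00 n1 n2 Z.
rewrite ev_Dl; apply: eq0_eps => e e0.
have e20 : 0 < e / 2 by rewrite divr_gt0.
have [d1 d10 H1] := open_box OP.
have [d2 d20 H2] := cont_box (ev_cont (L:=mapT L) OP) e20.
have [d3 d30 H3] := cont_box (ev_cont (L:=mapF L) OP) e20.
have [k k0 [k1 k2 k3]] := min3 d10 d20 d30.
have [h h0 [hk hd _]] := min3 k0 d00 k0.
have he1 := normMle h0 n1.
have he2 := normMle h0 n2.
have inO : forall x y, `|x - P1| <= h -> `|y - P2| <= h -> O (x, y).
  move=> x y hx hy; apply: H1 => /=.
    by apply: le_lt_trans hx _; apply: lt_trans hk k1.
  by apply: le_lt_trans hy _; apply: lt_trans hk k1.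
have nh2 : `|P2 + h * e2 - P2| <= h by rewrite addrAC subrr add0r.
have n0P1 : `|P1 - P1| <= h by rewrite subrr normr0 ltW.
have n0P1' : `|P1 - P1| < d3 by rewrite subrr normr0.
have [c1 c1h E1] := @mvt_abs (fun x => ev L (x, P2 + h * e2))
   (fun x => ev (mapT L) (x, P2 + h * e2)) P1 (h * e1)
   (fun y hy => ev_isdx L (inO y _ (le_trans hy he1) nh2)).
have [c2 c2h E2] := @mvt_abs (fun y => ev L (P1, y))
   (fun y => ev (mapF L) (P1, y)) P2 (h * e2)
   (fun y hy => ev_isdy L (inO P1 y n0P1 (le_trans hy he2))).
have A0 : ev L (P1 + h * e1, P2 + h * e2) = 0.
  by apply: Z; rewrite gtr0_norm.
have C0 : ev L (P1, P2) = 0.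
  by have := Z 0; rewrite normr0 !mul0r !addr0 => ->.
have hn0 : h != 0 by rewrite gt_eqF.
have EE := alg2 A0 C0 E1 E2 hn0.
have a1 := H2 (c1, P2 + h * e2) (le_lt_trans (le_trans c1h he1) (lt_trans hk k2))
   (le_lt_trans nh2 (lt_trans hk k2)).
have a2 := H3 (P1, c2) n0P1'
   (le_lt_trans (le_trans c2h he2) (lt_trans hk k3)).
rewrite [e in _ < e](splitr e); exact: fin2 n1 n2 EE a1 a2.
Qed.


Definition ell (x0 : R * R) (e1 e2 t : R) := (x0.1 + t * e1, x0.2 + t * e2).

Lemma ray_step x0 hs e1 e2 L :
  (forall t, 0 <= t <= hs -> O (ell x0 e1 e2 t)) -> `|e1| <= 1 -> `|e2| <= 1 ->
  (forall t, 0 < t < hs -> ev L (ell x0 e1 e2 t) = 0) ->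
  forall t, 0 < t < hs -> ev (Dl e1 e2 L) (ell x0 e1 e2 t) = 0.
Proof.
move=> sO n1 n2 Z t /andP[t0 th].
have m0 : 0 < Num.min t (hs - t) by rewrite lt_min t0 subr_gt0 th.
apply: (ray_point _ m0) => //.
  by apply: sO; rewrite ltW // ltW.
move=> s; rewrite lt_min => /andP[s1 s2].
have -> : ((ell x0 e1 e2 t).1 + s * e1, (ell x0 e1 e2 t).2 + s * e2) =
   ell x0 e1 e2 (t + s) by rewrite /ell /= !mulrDl !addrA.
apply: Z; move: s1 s2; rewrite !ltr_norml => /andP[a1 a2] /andP[b1 b2].
apply/andP; split; lra.
Qed.

Definition E1 (e1 e2 : R) (k : nat) := iter k (Dl e1 e2) [:: (1, [::])].

Lemma Ek_zero x0 hs e1 e2 k :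
  (forall t, 0 <= t <= hs -> O (ell x0 e1 e2 t)) -> `|e1| <= 1 -> `|e2| <= 1 ->
  (forall t, 0 < t < hs -> f (ell x0 e1 e2 t) = 0) ->
  forall t, 0 < t < hs -> ev (E1 e1 e2 k) (ell x0 e1 e2 t) = 0.
Proof.
move=> sO n1 n2 Z; elim: k => [|k IH].
  by move=> t tI; rewrite /E1 /= /ev big_cons big_nil mul1r addr0; exact: Z.
by rewrite /E1 iterS; apply: ray_step.
Qed.

Lemma at_x0 x0 hs e1 e2 L : O x0 -> 0 < hs -> `|e1| <= 1 -> `|e2| <= 1 ->
  (forall t, 0 < t < hs -> ev L (ell x0 e1 e2 t) = 0) -> ev L x0 = 0.
Proof.
move=> Ox0 hs0 n1 n2 Z; apply: eq0_eps => e e0.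
have [d d0 Hd] := cont_box (ev_cont (L:=L) Ox0) e0.
have [t t0 [td th _]] := min3 d0 hs0 d0.
have := Hd (ell x0 e1 e2 t).
rewrite /= Z ?t0 ?th // sub0r normrN; apply.
  by rewrite addrAC subrr add0r; apply: le_lt_trans (normMle t0 n1) td.
by rewrite addrAC subrr add0r; apply: le_lt_trans (normMle t0 n2) td.
Qed.


Definition Gsum (L : seq (R * seq bool)) (g : R) :=
  \sum_(c <- L) c.1 * cos (g + (count id c.2)%:R * (pi / 2)).

Lemma G_Dl e1 e2 L g :
  Gsum (Dl e1 e2 L) g = e1 * Gsum L (g + pi / 2) + e2 * Gsum L g.
Proof.
rewrite /Gsum big_cat !big_map !mulr_sumr; congr (_ + _); apply: eq_bigr => c _ /=.
  rewrite -mulrA; congr (_ * (_ * cos _)).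
  by rewrite natrD mulrDl mul1r addrA.
by rewrite -mulrA.
Qed.

Lemma G_iter phi k g :
  Gsum (E1 (cos phi) (sin phi) k) g = cos (g + k%:R * (pi / 2 - phi)).
Proof.
elim: k g => [|k IH] g.
  by rewrite /Gsum /E1 /= big_cons big_nil mul1r addr0 !mul0r !addr0.
rewrite /E1 iterS G_Dl -/(E1 _ _ k) !IH.
have cb : cos (pi / 2 - phi) = sin phi.
  by rewrite cosB cos_pihalf sin_pihalf mul0r mul1r add0r.
have sb : sin (pi / 2 - phi) = cos phi.
  by rewrite sinB cos_pihalf sin_pihalf mul0r mul1r subr0.
rewrite (addrAC g) cosDpihalf.
set b := pi / 2 - phi.
rewrite -[k.+1%:R]natr1 mulrDl mul1r addrA (cosD (g + k%:R * b) b) /b cb sb.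
ring.
Qed.

Lemma E1_size e1 e2 k : all (fun c => size c.2 == k) (E1 e1 e2 k).
Proof.
elim: k => [|k IH]; first by [].
rewrite /E1 iterS -/(E1 _ _ k) /Dl all_cat !all_map.
by apply/andP; split; apply: sub_all IH => c /=.
Qed.

End S.

Section Trig.
Variable R : realType.

Lemma sin_ne0 (k : nat) (al : R) : (1 <= k)%N -> 0 < al < 1 ->
  (forall q : nat, (1 <= q)%N -> (q < k)%N -> al != q%:R / k%:R) ->
  sin (k%:R * (al * pi)) != 0.
Proof.
move=> k1 /andP[a0 a1] H.
have k0 : 0 < k%:R :> R by rewrite ltr0n.
set y := k%:R * al.
have y0 : 0 < y by rewrite mulr_gt0.
have yk : y < k%:R by rewrite /y -{2}(mulr1 k%:R) ltr_pM2l.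
have [/andP[jy yj]] := archimedean.Num.Theory.truncn_itv (ltW y0).
set j := Num.truncn y.
have -> : k%:R * (al * pi) = y * pi by rewrite /y mulrA.
case: (eqVneq y j%:R) => yj'.
  have jk : (j < k)%N by rewrite -(ltr_nat R) -yj'.
  have j1 : (1 <= j)%N.
    by rewrite lt0n; apply/eqP => j0; move: y0; rewrite yj' j0 ltxx.
  have E : al = j%:R / k%:R by rewrite -yj' /y (mulrC k%:R al) mulfK ?gt_eqF.
  by move: (H j j1 jk); rewrite -E eqxx.
have jy' : j%:R < y by rewrite lt_neqAle eq_sym yj' jy.
have -> : y * pi = (y - j%:R) * pi + pi *+ j by rewrite mulrBl -mulr_natl; ring.
rewrite (alternatingn (@sinDpi R)) mulf_neq0 ?signr_eq0 //.
apply/lt0r_neq0/sin_gt0_pi/andP; split.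
  by rewrite mulr_gt0 ?pi_gt0 // subr_gt0.
have yj2 : y < j%:R + 1 by rewrite natr1.
by rewrite -{2}(mul1r pi) ltr_pM2r ?pi_gt0 //; lra.
Qed.

End Trig.

Section Main.
Variable R : realType.
Variables (Om : set (R * R)) (lam : R) (u : R * R -> R) (x0 : R * R).
Variables (th al hs : R) (n : nat).
Hypothesis oO : open Om.
Hypothesis su : smooth_on Om u.
Hypothesis pde : forall p, Om p -> - laplacian u p = lam * u p.
Hypothesis Ox0 : Om x0.
Hypothesis hs0 : 0 < hs.
Hypothesis al01 : 0 < al < 1.
Hypothesis segO : forall phi, phi = th \/ phi = th + al * pi ->
  forall t, 0 <= t <= hs -> Om (ell x0 (cos phi) (sin phi) t).
Hypothesis segZ : forall phi, phi = th \/ phi = th + al * pi ->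
  forall t, 0 < t < hs -> u (ell x0 (cos phi) (sin phi) t) = 0.
Hypothesis nq : forall p q : nat, (1 <= q)%N -> (q < p)%N -> (p <= n.-1)%N ->
     al != q%:R / p%:R.

Lemma pde_xx p : Om p ->
  pderiv [:: true; true] u p = -1 * pderiv [:: false; false] u p + (- lam) * u p.
Proof.
move=> Op; have E := pde Op; rewrite /laplacian in E.
rewrite /pderiv /=.
have -> : - lam * u p = - (lam * u p) by rewrite mulNr.
rewrite -E; ring.
Qed.

Lemma harm_shift s1 p : Om p ->
  pderiv (s1 ++ [:: true; true]) u p =
  - pderiv (s1 ++ [:: false; false]) u p - lam * pderiv s1 u p.
Proof.
move=> Op; rewrite !pderiv_cat.
have E1 : pderiv s1 (pderiv [:: true; true] u) p =
   pderiv s1 (fun q => -1 * pderiv [:: false; false] u q + (- lam) * u q) p.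
  by apply: (pderiv_loc oO s1 _ Op) => q Oq; exact: pde_xx.
have E2 := pderiv_lin oO s1 (-1) (-lam) (smooth_pderiv [:: false; false] su) su Op.
apply: (etrans E1); apply: (etrans E2).
by rewrite mulN1r mulNr.
Qed.

Lemma cnt (s : seq bool) : (count id s + count negb s)%N = size s.
Proof. by elim: s => //= b s IH; case: b => /=; lia. Qed.

Lemma sym s p : Om p ->
  pderiv s u p = pderiv (nseq (count id s) true ++ nseq (size s - count id s) false) u p.
Proof. by move=> Op; rewrite (canon oO s su Op) -(cnt s) addKn. Qed.

Lemma count_canon j m : count id (nseq j true ++ nseq m false) = j.
Proof. by rewrite count_cat !count_nseq /= mul1n mul0n addn0. Qed.

Lemma size_canon j m : size (nseq j true ++ nseq m false) = (j + m)%N.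
Proof. by rewrite size_cat !size_nseq. Qed.

Lemma dir_zero phi k : phi = th \/ phi = th + al * pi ->
  ev u (E1 (cos phi) (sin phi) k) x0 = 0.
Proof.
move=> hphi.
apply: (at_x0 su Ox0 hs0 (cos_max _) (sin_max _)) => t tI.
exact: (Ek_zero oO su k (segO hphi) (cos_max _) (sin_max _) (segZ hphi) tI).
Qed.

Lemma ev_formula k phi (a : nat -> R) :
  (forall s, size s = k -> pderiv s u x0 = a (count id s)) ->
  (forall j, (j <= k)%N -> a j = a 0%N * cos (0 + j%:R * (pi / 2)) + a 1%N * cos (- (pi / 2) + j%:R * (pi / 2))) ->
  ev u (E1 (cos phi) (sin phi) k) x0 =
  a 0%N * cos (0 + k%:R * (pi / 2 - phi)) + a 1%N * cos (- (pi / 2) + k%:R * (pi / 2 - phi)).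
Proof.
move=> Hs Ha; rewrite -!G_iter /Gsum !mulr_sumr -big_split /ev /=.
rewrite big_seq [RHS]big_seq; apply: eq_bigr => c cin.
have /eqP sz := allP (E1_size (cos phi) (sin phi) k) c cin.
rewrite (Hs c.2 sz) (Ha (count id c.2)); last by rewrite -sz count_size.
ring.
Qed.

Lemma solve2 (a0 a1 c1 s1 c2 s2 : R) : a0 * c1 + a1 * s1 = 0 -> a0 * c2 + a1 * s2 = 0 ->
  s2 * c1 - c2 * s1 != 0 -> a0 = 0 /\ a1 = 0.
Proof.
move=> E1 E2 D0; split.
  have : a0 * (s2 * c1 - c2 * s1) = s2 * (a0 * c1 + a1 * s1) - s1 * (a0 * c2 + a1 * s2) by ring.
  by rewrite E1 E2 !mulr0 subr0 => /eqP; rewrite mulf_eq0 (negbTE D0) orbF => /eqP.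
have : a1 * (s2 * c1 - c2 * s1) = c1 * (a0 * c2 + a1 * s2) - c2 * (a0 * c1 + a1 * s1) by ring.
by rewrite E1 E2 !mulr0 subr0 => /eqP; rewrite mulf_eq0 (negbTE D0) orbF => /eqP.
Qed.

Lemma harm_alg (A B C x y : R) : A = - B - lam * C -> A = x -> B = y -> C = 0 -> x = - y.
Proof. by move=> H <- <- C0; rewrite H C0 mulr0 subr0. Qed.

Lemma cos_shift (g : R) (j : nat) : cos (g + j.+2%:R * (pi / 2)) = - cos (g + j%:R * (pi / 2)).
Proof.
have e : j.+2%:R = j%:R + 2 :> R by rewrite -natrD addn2.
have e2 : 2 * (pi / 2) = pi :> R by rewrite mulrC divfK.
by rewrite e mulrDl e2 addrA cosDpi.
Qed.

Lemma order_k k : (k <= n.-1)%N ->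
  (forall k', (k' < k)%N -> forall s, size s = k' -> pderiv s u x0 = 0) ->
  forall s, size s = k -> pderiv s u x0 = 0.
Proof.
move=> kn IH.
case: k kn IH => [|k] kn IH.
  move=> s /size0nil ->.
  have := dir_zero 0%N (or_introl erefl).
  by rewrite /E1 /= /ev big_cons big_nil mul1r addr0.
set K := k.+1.
pose a j := pderiv (nseq j true ++ nseq (K - j) false) u x0.
have Hs : forall s, size s = K -> pderiv s u x0 = a (count id s).
  by move=> s sz; rewrite (sym s Ox0) sz.
have harm : forall j, (j.+2 <= K)%N -> a j.+2 = - a j.
  move=> j jK.
  set s1 := nseq j true ++ nseq (K - j.+2) false.
  have sz1 : size s1 = (K - 2)%N by rewrite size_canon; lia.
  have H := harm_shift s1 Ox0.
  have c1 : count id (s1 ++ [:: true; true]) = j.+2 by rewrite count_cat count_canon addn2.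
  have z1 : size (s1 ++ [:: true; true]) = K by rewrite size_cat sz1 /=; lia.
  have c2 : count id (s1 ++ [:: false; false]) = j by rewrite count_cat count_canon addn0.
  have z2 : size (s1 ++ [:: false; false]) = K by rewrite size_cat sz1 /=; lia.
  have e1 : pderiv (s1 ++ [:: true; true]) u x0 = a j.+2 by rewrite (Hs _ z1) c1.
  have e2 : pderiv (s1 ++ [:: false; false]) u x0 = a j by rewrite (Hs _ z2) c2.
  have e3 : pderiv s1 u x0 = 0 by apply: (IH (K - 2)%N) => //; lia.
  exact: harm_alg H e1 e2 e3.
have aform : forall j, (j <= K)%N ->
    a j = a 0%N * cos (0 + j%:R * (pi / 2)) + a 1%N * cos (- (pi / 2) + j%:R * (pi / 2)).
  have P2 : forall j, ((j <= K)%N -> a j = a 0%N * cos (0 + j%:R * (pi / 2)) + a 1%N * cos (- (pi / 2) + j%:R * (pi / 2))) /\ ((j.+1 <= K)%N -> a j.+1 = a 0%N * cos (0 + j.+1%:R * (pi / 2)) + a 1%N * cos (- (pi / 2) + j.+1%:R * (pi / 2))).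
    elim => [|j [IH1 IH2]].
      split => _.
        by rewrite mulr0n mul0r !addr0 cos0 cosN cos_pihalf mulr1 mulr0 addr0.
      by rewrite mulr1n mul1r add0r cos_pihalf addNr cos0 mulr0 add0r mulr1.
    split; first exact: IH2.
    move=> jK; rewrite harm // IH1; last by apply: leq_trans jK; lia.
    by rewrite !cos_shift; ring.
  by move=> j /(proj1 (P2 j)).
have z1 := dir_zero K (or_introl erefl).
have z2 := dir_zero K (or_intror erefl).
rewrite (ev_formula _ Hs aform) (@add0r R) (addrC (- _)) cosBpihalf in z1.
rewrite (ev_formula _ Hs aform) (@add0r R) (addrC (- _)) cosBpihalf in z2.
have D : sin (K%:R * (pi / 2 - (th + al * pi))) * cos (K%:R * (pi / 2 - th)) -
         cos (K%:R * (pi / 2 - (th + al * pi))) * sin (K%:R * (pi / 2 - th)) != 0.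
  rewrite -sinB.
  have -> : K%:R * (pi / 2 - (th + al * pi)) - K%:R * (pi / 2 - th) = - (K%:R * (al * pi)) by ring.
  rewrite sinN oppr_eq0; apply: sin_ne0 => // q q1 qK.
  by apply: nq => //.
have [a00 a10] := solve2 z1 z2 D.
move=> s sz; rewrite (Hs s sz) aform; last by rewrite -sz count_size.
by rewrite a00 a10 !mul0r addr0.
Qed.

End Main.

Unset Implicit Arguments.
Set Strict Implicit.

Theorem theorem3p2 (R : realType) (Omega : set (R * R)) (lambda : R)
  (u : R * R -> R) (x0 : R * R) (h alpha theta : R) (n : nat) :
  open Omega ->
  0 < lambda ->
  L2_on Omega u ->
  smooth_on Omega u ->
  (forall p, Omega p -> - laplacian u p = lambda * u p) ->
  Omega x0 ->
  0 < h ->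
  0 < alpha < 1 ->
  (* e^- = (cos theta, sin theta), e^+ = e^- rotated by alpha*pi *)
  let em := (cos theta, sin theta) in
  let ep := (cos (theta + alpha * pi), sin (theta + alpha * pi)) in
  segment x0 ep h `<=` Omega ->
  segment x0 em h `<=` Omega ->
  (forall x, segment x0 ep h x -> u x = 0) ->
  (forall x, segment x0 em h x -> u x = 0) ->
  (3 <= n)%N ->
  (forall p q : nat, (1 <= q)%N -> (q < p)%N -> (p <= n.-1)%N ->
     alpha != q%:R / p%:R) ->
  forall s : seq bool, (size s <= n.-1)%N -> pderiv s u x0 = 0.
Proof.
move=> oO _ _ su pde Ox0 h0 al01 em ep segp segm zp zm _ nq s sz.
have segO : forall phi, phi = theta \/ phi = theta + alpha * pi ->
    forall t, 0 <= t <= h -> Omega (ell x0 (cos phi) (sin phi) t).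
  move=> phi [->|->] t tI; [apply: segm|apply: segp]; by exists t.
have segZ : forall phi, phi = theta \/ phi = theta + alpha * pi ->
    forall t, 0 < t < h -> u (ell x0 (cos phi) (sin phi) t) = 0.
  move=> phi [->|->] t /andP[t0 th]; [apply: zm|apply: zp]; exists t;
    by rewrite !ltW.
have main : forall k, (k <= n.-1)%N -> forall s, size s = k -> pderiv s u x0 = 0.
  elim/ltn_ind => k IHk kn.
  apply: (order_k oO su pde Ox0 h0 al01 segO segZ nq kn) => k' k'k.
  by apply: IHk => //; apply: leq_trans (ltnW k'k) kn.
exact: main sz s erefl.
Qed.
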